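(* Let $X$ be a finite dimensional real Hilbert space, let $g:X\to\mathbb{R}$ be a convex function (finite everywhere) with $\min_{x\in X}g(x)<0$, let $C:=\{x\in X:g(x)\leq0\}$, and let $\bar{x}\in X$. Consider the following iteration. Set $x_{0}=\bar{x}$ and let $H_{0}=\{x:\langle c_{0},x\rangle\leq b\}$ be a set of this form with $C\subset H_{0}$ (possibly $c_{0}=0$, $b=0$, i.e. $H_{0}=X$). For $k=0,1,2,\dots$: choose $s_{k}\in\partial g(x_{k})$, let $\tilde{C}_{k}=\{x:g(x_{k})+\langle x-x_{k},s_{k}\rangle\leq0\}$, let $x_{k+1}=P_{H_{k}\cap\tilde{C}_{k}}(\bar{x})$, and let $H_{k+1}$ be the halfspace such that $x_{k+1}=P_{H_{k+1}}(\bar{x})$, namely $H_{k+1}=\{x:\langle\bar{x}-x_{k+1},x-x_{k+1}\rangle\leq0\}$. Suppose that $g(x_{k})>0$ for all $k\geq0$ (so that $x_{k}\notin\tilde{C}_{k}$ and all iterates are defined). Let $v_{k}:=d(\bar{x},C)^{2}-\|\bar{x}-x_{k}\|^{2}$. Then $v_{k}$ converges to zero at a rate $O(1/k)$, i.e. there is a constant $M$ with $v_{k}\leq M/k$ for all $k\geq1$.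
   Context: $P_{S}(y)$ denotes the projection of $y$ onto a nonempty closed convex set $S$; $d(y,S)$ is the distance from $y$ to $S$; $\partial g(x)$ is the convex subdifferential. Note $v_k$ is twice the gap between the optimal value $\frac12 d(\bar x,C)^2$ of $\min_{x\in C}\frac12\|x-\bar x\|^2$ and the value $\frac12\|\bar x-x_k\|^2$ of the relaxed problem. *)

(* Defs.v *)
(* X = 'rV[R]_n with the standard inner product, R : realType. *)
From HB Require Import structures.
From mathcomp Require Import all_boot all_order all_algebra.
From mathcomp Require Import boolp classical_sets reals.
Set Implicit Arguments. Unset Strict Implicit. Unset Printing Implicit Defensive.
Import Order.TTheory GRing.Theory Num.Theory.
Local Open Scope ring_scope.
Local Open Scope classical_set_scope.

Definition ip (R : realType) (n : nat) (u v : 'rV[R]_n) : R := (u *m v^T) 0 0.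

Definition vnorm (R : realType) (n : nat) (u : 'rV[R]_n) : R := Num.sqrt (ip u u).

Definition convex_fun (R : realType) (n : nat) (g : 'rV[R]_n -> R) : Prop :=
  forall (x y : 'rV[R]_n) (t : R), 0 <= t -> t <= 1 ->
    g (t *: x + (1 - t) *: y) <= t * g x + (1 - t) * g y.

Definition subgrad (R : realType) (n : nat) (g : 'rV[R]_n -> R) (x s : 'rV[R]_n) : Prop :=
  forall y, g x + ip (y - x) s <= g y.

Definition is_proj (R : realType) (n : nat) (S : set 'rV[R]_n) (y p : 'rV[R]_n) : Prop :=
  S p /\ forall q, S q -> vnorm (y - p) <= vnorm (y - q).

Definition dist (R : realType) (n : nat) (y : 'rV[R]_n) (S : set 'rV[R]_n) : R :=
  inf [set vnorm (y - z) | z in S].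

(* Main.v *)
Require Import Defs.
From HB Require Import structures.
From mathcomp Require Import all_boot all_order all_algebra.
From mathcomp Require Import boolp classical_sets reals.
From mathcomp Require Import ring lra.
Set Implicit Arguments. Unset Strict Implicit. Unset Printing Implicit Defensive.
Import Order.TTheory GRing.Theory Num.Theory.
Local Open Scope ring_scope.
Local Open Scope classical_set_scope.

Section IP.
Variables (R : realType) (n : nat).
Implicit Types (u v w : 'rV[R]_n) (a : R).

Lemma ipE u v : ip u v = \sum_j u 0 j * v 0 j.
Proof. by rewrite /ip !mxE; apply: eq_bigr => j _; rewrite mxE. Qed.

Lemma ipC u v : ip u v = ip v u.
Proof. by rewrite !ipE; apply: eq_bigr => j _; rewrite mulrC. Qed.

Lemma ipDl u v w : ip (u + w) v = ip u v + ip w v.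
Proof. by rewrite !ipE -big_split; apply: eq_bigr => j _; rewrite mxE mulrDl. Qed.

Lemma ipZl a u v : ip (a *: u) v = a * ip u v.
Proof. by rewrite !ipE mulr_sumr; apply: eq_bigr => j _; rewrite mxE mulrA. Qed.

Lemma ipNl u v : ip (- u) v = - ip u v.
Proof. by rewrite -scaleN1r ipZl mulN1r. Qed.

Lemma ipBl u v w : ip (u - w) v = ip u v - ip w v.
Proof. by rewrite ipDl ipNl. Qed.

Lemma ipDr u v w : ip v (u + w) = ip v u + ip v w.
Proof. by rewrite ipC ipDl !(ipC v). Qed.

Lemma ipZr a u v : ip v (a *: u) = a * ip v u.
Proof. by rewrite ipC ipZl ipC. Qed.

Lemma ipNr u v : ip v (- u) = - ip v u.
Proof. by rewrite ipC ipNl ipC. Qed.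

Lemma ipBr u v w : ip v (u - w) = ip v u - ip v w.
Proof. by rewrite ipDr ipNr. Qed.

Lemma ip_ge0 u : 0 <= ip u u.
Proof. by rewrite ipE; apply: sumr_ge0 => j _; rewrite -expr2 sqr_ge0. Qed.

Lemma ip0l v : ip 0 v = 0.
Proof. by rewrite -(scale0r 0) ipZl mul0r. Qed.

Lemma vnorm_ge0 u : 0 <= vnorm u.
Proof. exact: sqrtr_ge0. Qed.

Lemma vnorm_sq u : vnorm u ^+ 2 = ip u u.
Proof. by rewrite sqr_sqrtr // ip_ge0. Qed.

Lemma vnormN u : vnorm (- u) = vnorm u.
Proof. by rewrite /vnorm ipNl ipNr opprK. Qed.

Lemma vnormB u v : vnorm (u - v) = vnorm (v - u).
Proof. by rewrite -vnormN opprB. Qed.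

Lemma vnormZ a u : vnorm (a *: u) = `|a| * vnorm u.
Proof.
by rewrite /vnorm ipZl ipZr mulrA -expr2 sqrtrM ?sqr_ge0 // sqrtr_sqr.
Qed.

Lemma vnorm0 : vnorm (0 : 'rV[R]_n) = 0.
Proof. by rewrite /vnorm ip0l sqrtr0. Qed.

Lemma cs_sq u v : ip u v ^+ 2 <= ip u u * ip v v.
Proof.
set a := ip u u; set b := ip v v; set p := ip u v.
have ha : 0 <= a := ip_ge0 u. have hb : 0 <= b := ip_ge0 v.
have h1 : 0 <= ip (b *: u - p *: v) (b *: u - p *: v) := ip_ge0 _.
rewrite !ipBl !ipBr !ipZl !ipZr -/a -/b -/p (ipC v u) -/p in h1.
have h2 : 0 <= ip (a *: v - p *: u) (a *: v - p *: u) := ip_ge0 _.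
rewrite !ipBl !ipBr !ipZl !ipZr -/a -/b -/p (ipC v u) -/p in h2.
have h3 : 0 <= ip (u + v) (u + v) := ip_ge0 _.
rewrite !ipDl !ipDr -/a -/b -/p (ipC v u) -/p in h3.
have h4 : 0 <= ip (u - v) (u - v) := ip_ge0 _.
rewrite !ipBl !ipBr -/a -/b -/p (ipC v u) -/p in h4.
clearbody a b p.
have [bp|b0] := ltrP 0 b.
  have : 0 <= b * (a * b - p ^+ 2) by nra.
  rewrite pmulr_rge0 // subr_ge0 mulrC //.
have [ap|a0] := ltrP 0 a.
  have : 0 <= a * (a * b - p ^+ 2) by nra.
  rewrite pmulr_rge0 // subr_ge0 mulrC //.
have -> : a = 0 by apply/eqP; rewrite eq_le a0 ha.
have -> : b = 0 by apply/eqP; rewrite eq_le b0 hb.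
have -> : p = 0 by lra.
by rewrite expr0n mul0r.
Qed.

Lemma cs u v : ip u v <= vnorm u * vnorm v.
Proof.
have h := cs_sq u v; rewrite -!vnorm_sq -exprMn in h.
have := mulr_ge0 (vnorm_ge0 u) (vnorm_ge0 v).
move: h; set q := vnorm u * vnorm v; set p := ip u v; clearbody q p => h hq.
nra.
Qed.

Lemma vnorm_tri u v : vnorm (u + v) <= vnorm u + vnorm v.
Proof.
have h : vnorm (u + v) ^+ 2 <= (vnorm u + vnorm v) ^+ 2.
  rewrite vnorm_sq !ipDl !ipDr (ipC v u) sqrrD -!vnorm_sq.
  have := cs u v; lra.
have := vnorm_ge0 u; have := vnorm_ge0 v; have := vnorm_ge0 (u + v); nra.
Qed.

Lemma coord_le u i : `|u 0 i| <= vnorm u.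
Proof.
have h : u 0 i ^+ 2 <= vnorm u ^+ 2.
  rewrite vnorm_sq ipE (bigD1 i) //= -expr2 lerDl.
  by apply: sumr_ge0 => j _; rewrite -expr2 sqr_ge0.
have := vnorm_ge0 u; rewrite -[u 0 i ^+ 2]real_normK ?num_real // in h.
move: h; set q := vnorm u; set p := `|u 0 i|; have : 0 <= p by apply: normr_ge0.
clearbody q p; nra.
Qed.

End IP.
Lemma maxl (R : realType) (a b : R) : a <= Num.max a b.
Proof. by rewrite le_max lexx. Qed.
Lemma maxr (R : realType) (a b : R) : b <= Num.max a b.
Proof. by rewrite le_max lexx orbT. Qed.

Lemma box_bound (R : realType) (n : nat) (g : 'rV[R]_n -> R) (xbar : 'rV[R]_n) :
  convex_fun g -> forall j : nat, forall r : R, 0 < r -> exists B : R,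
  forall u : 'rV[R]_n, (forall i, `|u 0 i| <= r) ->
    (forall i : 'I_n, (j <= i)%N -> u 0 i = 0) -> g (xbar + u) <= B.
Proof.
move=> cvx; elim=> [|j IH] r r0.
  exists (g xbar) => u _ hz.
  suff -> : u = 0 by rewrite addr0.
  by apply/rowP => i; rewrite mxE hz.
have [jn|jn] := ltnP j n; last first.
  have [B HB] := IH r r0; exists B => u h1 h2; apply: HB => // i ji.
  by have := ltn_ord i; rewrite ltnNge (leq_trans jn ji).
pose jj := Ordinal jn.
pose e : 'rV[R]_n := \row_i ((i == jj)%:R).
have r2 : 0 < 2 * r by lra.
have [B1 HB1] := IH (2 * r) r2.
pose g1 := g (xbar + (2 * r) *: e); pose g2 := g (xbar - (2 * r) *: e).
exists ((B1 + Num.max g1 g2) / 2) => u h1 h2.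
have e_jj : e 0 jj = 1 by rewrite mxE eqxx.
have e_i i : i != jj -> e 0 i = 0 by move=> /negPf hi; rewrite mxE hi.
clearbody e.
pose u' := u - u 0 jj *: e.
have hA : g (xbar + 2 *: u') <= B1.
  apply: HB1.
    move=> i; rewrite !mxE; have [->|hi] := eqVneq i jj.
      by rewrite e_jj mulr1 subrr mulr0 normr0; lra.
    rewrite e_i // mulr0 subr0 normrM ger0_norm; last lra.
    by have := h1 i; lra.
  move=> i ji; rewrite !mxE; have [->|hi] := eqVneq i jj.
    by rewrite e_jj mulr1 subrr mulr0.
  rewrite e_i // mulr0 subr0 h2 ?mulr0 //.
  rewrite ltn_neqAle ji andbT; apply/negP => /eqP hij; apply/negP: hi.
  by rewrite negbK; apply/eqP/val_inj.
have hB : g (xbar + (2 * u 0 jj) *: e) <= Num.max g1 g2.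
  pose t := (r + u 0 jj) / (2 * r).
  have hu := h1 jj; move: hu; rewrite ler_norml => /andP [hu1 hu2].
  have t0 : 0 <= t by apply: divr_ge0; lra.
  have t1 : t <= 1 by rewrite ler_pdivrMr //; lra.
  have -> : xbar + (2 * u 0 jj) *: e =
     t *: (xbar + (2 * r) *: e) + (1 - t) *: (xbar - (2 * r) *: e).
    apply/rowP => i; rewrite !mxE /t; field; lra.
  apply: le_trans (cvx _ _ _ t0 t1) _.
  rewrite -/g1 -/g2.
  have := maxl g1 g2; have := maxr g1 g2.
  set m := Num.max g1 g2; clearbody m => ha hb; nra.
have -> : xbar + u = 2^-1 *: (xbar + 2 *: u') + (1 - 2^-1) *: (xbar + (2 * u 0 jj) *: e).
  apply/rowP => i; rewrite !mxE; field; lra.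
have := cvx (xbar + 2 *: u') (xbar + (2 * u 0 jj) *: e) (2^-1) ltac:(lra) ltac:(lra).
lra.
Qed.

Lemma ball_bound (R : realType) (n : nat) (g : 'rV[R]_n -> R) (xbar : 'rV[R]_n) (rad : R) :
  convex_fun g -> exists B : R, forall w, vnorm (w - xbar) <= rad -> g w <= B.
Proof.
move=> cvx.
have r0 : 0 < Num.max rad 0 + 1 by have := maxr rad 0; lra.
have [B HB] := box_bound xbar cvx n r0.
exists B => w hw.
have -> : w = xbar + (w - xbar) by rewrite addrC subrK.
apply: HB; last by move=> i; rewrite leqNgt ltn_ord.
move=> i; apply: le_trans (coord_le _ i) _.
have := maxl rad 0; lra.
Qed.
Lemma rate_step (R : realFieldType) (c M K p q : R) : 0 < c -> c <= M -> 1 <= K ->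
  q * K <= M -> 0 < p -> p <= q -> q ^+ 2 <= c * (q - p) -> p * (K + 1) <= M.
Proof.
move=> c0 cM K1 hq p0 pq hsq.
have q0 : 0 < q by lra.
have h1 : p * (c + q) <= c * q by nra.
have h2 : c * q * (K + 1) <= M * (c + q) by nra.
have h3 : p * (K + 1) * (c + q) <= M * (c + q) by nra.
have cq : 0 < c + q by lra.
by rewrite -(ler_pM2r cq).
Qed.

Lemma rate (R : realFieldType) (v : nat -> R) (c M : R) : 0 < c -> c <= M -> v 1%N <= M ->
  (forall k, v k.+1 <= v k) -> (forall k, 0 < v k.+1 -> v k ^+ 2 <= c * (v k - v k.+1)) ->
  forall k, (1 <= k)%N -> v k <= M / k%:R.
Proof.
move=> c0 cM v1 dec hk; elim=> [//|k IH] _.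
case: k IH => [_|k IH]; first by rewrite divr1.
have M0 : 0 <= M by lra.
have K1 : 1 <= (k.+1)%:R :> R by rewrite ler1n.
have hK : 0 < (k.+1)%:R :> R by lra.
have hK2 : 0 < (k.+2)%:R :> R by rewrite ltr0n.
have [p0|p0] := lerP (v k.+2) 0.
  by apply: le_trans p0 _; apply: divr_ge0 => //; apply: ltW.
rewrite ler_pdivlMr // -[(k.+2)%:R]natr1 -/(nat_of_bool true).
have := IH isT; rewrite ler_pdivlMr // => hq.
apply: (rate_step c0 cM K1 hq p0 (dec _) (hk _ p0)).
Qed.
Unset Implicit Arguments.
Theorem mainTheorem3 (R : realType) (n : nat) (g : 'rV[R]_n -> R)
  (xbar c0 : 'rV[R]_n) (b : R) (x s : nat -> 'rV[R]_n) :
  convex_fun g ->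
  (exists z, g z < 0) ->
  let C := [set z | g z <= 0] in
  let H := fun k : nat =>
    match k with
    | 0%N => [set z | ip c0 z <= b]
    | k'.+1 => [set z | ip (xbar - x k) (z - x k) <= 0]
    end in
  let Ct := fun k : nat => [set z | g (x k) + ip (z - x k) (s k) <= 0] in
  C `<=` H 0%N ->
  x 0%N = xbar ->
  (forall k, subgrad g (x k) (s k)) ->
  (forall k, is_proj (H k `&` Ct k) xbar (x k.+1)) ->
  (forall k, 0 < g (x k)) ->
  exists M : R, forall k : nat, (1 <= k)%N ->
    dist xbar C ^+ 2 - vnorm (xbar - x k) ^+ 2 <= M / k%:R.
Proof.
move=> cvx [z hz] C H Ct _ x0 hsub hproj hpos.
set D := dist xbar C.
have hlb : has_lbound [set vnorm (xbar - y) | y in C].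
  by exists 0 => _ [y _ <-]; exact: vnorm_ge0.
have Dle : forall y, C y -> D <= vnorm (xbar - y).
  by move=> y Cy; apply: (ge_inf hlb); exists y.
have D0 : 0 <= D.
  apply: lb_le_inf; first by exists (vnorm (xbar - z)), z => //; rewrite /C /= ltW.
  by move=> _ [y _ <-]; exact: vnorm_ge0.
pose N k := vnorm (xbar - x k).
have N0 k : 0 <= N k by exact: vnorm_ge0.
have Mem k : H k (x k.+1) /\ Ct k (x k.+1) by case: (hproj k) => [[]].
have F2 k : N k ^+ 2 + vnorm (x k.+1 - x k) ^+ 2 <= N k.+1 ^+ 2.
  case: k => [|k].
    by rewrite /N x0 subrr vnorm0 expr0n /= add0r vnormB.
  have [hH _] := Mem k.+1; move: hH; rewrite /H /= => hH.
  rewrite /N !vnorm_sq.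
  have -> : xbar - x k.+2 = (xbar - x k.+1) - (x k.+2 - x k.+1).
    by rewrite opprB addrA subrK.
  rewrite !ipBl !ipBr; rewrite !ipBl !ipBr in hH; rewrite (ipC (x k.+2) xbar) (ipC (x k.+2) (x k.+1)) (ipC (x k.+1) xbar); lra.
have [B HB] := ball_bound xbar (D + 1) cvx.
pose L := Num.max B 0.
have F4 k : N k <= D -> vnorm (s k) <= L.
  move=> hN; set ns := vnorm (s k).
  have [ns0|ns0] := lerP ns 0; first by apply: le_trans ns0 (maxr _ _).
  pose w := x k + ns^-1 *: s k.
  have h1 := hsub k w.
  move: h1; rewrite -/w.
  have -> : w - x k = ns^-1 *: s k by rewrite /w addrC addKr.
  rewrite ipZl -vnorm_sq -/ns expr2 mulKf ?gt_eqF //.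
  have hw : vnorm (w - xbar) <= D + 1.
    have -> : w - xbar = (x k - xbar) + ns^-1 *: s k.
      by rewrite /w addrAC.
    apply: le_trans (vnorm_tri _ _) _.
    have nsi : 0 <= ns^-1 by rewrite invr_ge0 ltW.
    rewrite vnormZ -/ns ger0_norm // mulVf ?gt_eqF //.
    rewrite vnormB -/(N k); lra.
  have := HB w hw; have := maxl B 0; have := hpos k; rewrite -/L; lra.
have F3 k : g (x k) <= vnorm (x k.+1 - x k) * vnorm (s k).
  have [_ hC] := Mem k; move: hC; rewrite /Ct /= => hC.
  have := cs (x k - x k.+1) (s k).
  rewrite -[x k - x k.+1]opprB ipNl vnormN; lra.
set Z := vnorm (xbar - z).
pose K := (D + Z) / (- g z).
have hZ0 : 0 <= Z := vnorm_ge0 _.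
have K0 : 0 <= K by apply: divr_ge0; lra.
have F5 k : N k <= D -> D - N k <= g (x k) * K.
  move=> hN; set gk := g (x k); have gk0 : 0 < gk := hpos k.
  pose t := gk / (gk - g z).
  have hd : 0 < gk - g z by lra.
  have t0 : 0 <= t by apply: divr_ge0; lra.
  have t1 : t <= 1 by rewrite ler_pdivrMr //; lra.
  have tt : t * (gk - g z) = gk by rewrite /t mulfVK ?gt_eqF.
  pose y := t *: z + (1 - t) *: x k.
  have Cy : C y.
    rewrite /C /=; apply: le_trans (cvx _ _ _ t0 t1) _.
    rewrite -/gk; nra.
  have h1 := Dle y Cy.
  have ey : xbar - y = (xbar - x k) + t *: (x k - z).
    by apply/rowP => i; rewrite !mxE; ring.
  rewrite ey in h1.
  have h2 := le_trans h1 (vnorm_tri _ _).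
  rewrite vnormZ ger0_norm // -/(N k) in h2.
  have h3 : vnorm (x k - z) <= N k + Z.
    have -> : x k - z = (x k - xbar) + (xbar - z) by rewrite addrA subrK.
    by apply: le_trans (vnorm_tri _ _) _; rewrite vnormB.
  have h4 : t * (- g z) <= gk by nra.
  have h5 : t <= gk / (- g z) by rewrite ler_pdivlMr //; lra.
  have hZ : 0 <= Z := vnorm_ge0 _.
  rewrite /K mulrA.
  have : t * vnorm (x k - z) <= t * (D + Z) by apply: ler_wpM2l => //; lra.
  have : t * (D + Z) <= gk / - g z * (D + Z) by apply: ler_wpM2r => //; lra.
  lra.
pose v k := D ^+ 2 - N k ^+ 2.
pose c := 4 * D ^+ 2 * (K * L) ^+ 2 + 1.
have dec k : v k.+1 <= v k.
  have := F2 k; have := sqr_ge0 (vnorm (x k.+1 - x k)); rewrite /v; lra.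
have key k : 0 < v k.+1 -> v k ^+ 2 <= c * (v k - v k.+1).
  move=> hv.
  have hN1 : N k.+1 < D.
    move: hv; rewrite /v; have := N0 k.+1; nra.
  have hNN : N k <= N k.+1.
    have := F2 k; have := sqr_ge0 (vnorm (x k.+1 - x k)); have := N0 k; have := N0 k.+1; nra.
  have hN : N k <= D by lra.
  set e := D - N k.
  set Dl := vnorm (x k.+1 - x k).
  have hL : 0 <= L := maxr _ _.
  have hs := F4 k hN.
  have he : e <= K * L * Dl.
    apply: le_trans (F5 k hN) _.
    have := F3 k; rewrite -/Dl => h.
    have hD : 0 <= Dl := vnorm_ge0 _.
    have : g (x k) <= Dl * L by apply: le_trans h _; apply: ler_wpM2l.
    move=> h'; rewrite mulrC -mulrA; apply: ler_wpM2l => //; lra.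
  have e0 : 0 <= e by rewrite /e; lra.
  have he2 : e ^+ 2 <= (K * L) ^+ 2 * (v k - v k.+1).
    have : v k - v k.+1 = N k.+1 ^+ 2 - N k ^+ 2 by rewrite /v; ring.
    move=> ->; have := F2 k; rewrite -/Dl => hF.
    have hKL : 0 <= K * L by apply: mulr_ge0.
    have : e ^+ 2 <= (K * L) ^+ 2 * Dl ^+ 2.
      by rewrite -exprMn !expr2; apply: ler_pM.
    have : 0 <= (K * L) ^+ 2 by apply: sqr_ge0.
    nra.
  have hvk : v k = e * (D + N k) by rewrite /v /e; ring.
  have hvk0 : 0 <= v k by rewrite hvk; apply: mulr_ge0 => //; have := N0 k; lra.
  have hv2 : v k ^+ 2 <= 4 * D ^+ 2 * e ^+ 2.
    rewrite hvk; have : D + N k <= 2 * D by lra.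
    have := N0 k; move=> hn hh.
    rewrite exprMn; have : (D + N k) ^+ 2 <= (2 * D) ^+ 2.
      by rewrite !expr2; apply: ler_pM => //; lra.
    have := sqr_ge0 e; nra.
  have hd : 0 <= v k - v k.+1 by have := dec k; lra.
  rewrite /c; have := sqr_ge0 D; nra.
exists (Num.max c (v 1%N)) => k k1.
have cpos : 0 < c by rewrite /c; have := sqr_ge0 (D * (K * L)); rewrite exprMn mulrA; lra.
exact: (@rate R v c (Num.max c (v 1%N)) cpos (maxl _ _) (maxr _ _) dec key k k1).
Qed.
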